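(* Let $0<r_i<r_o$, $0<h<H$, $n>0$, $p>0$, let $a_r$, $\boldsymbol\sigma^0$ and $c=3^{\frac{n-1}{2}}a_r|a_r|^{n-1}n^{-n}$ be as in the context, and let $\boldsymbol C(r)$ be the compliance matrix defined in the context. Let $\boldsymbol\sigma^-=(\sigma^-_r,\sigma^-_\theta,\sigma^-_z,\sigma^-_{rz})$ be a continuously differentiable axisymmetric stress field on $\Omega^-=[r_i,r_o]\times[0,h]$ and $\boldsymbol\sigma^+$ one on $\Omega^+=[r_i,r_o]\times[h,H]$, each satisfying the axisymmetric equilibrium equations on its domain, with $\sigma^\pm_r=\sigma^\pm_{rz}=0$ at $r=r_i$ and $r=r_o$, $\sigma^-_{rz}=0$ at $z=0$, and $\sigma^+_{rz}=0$ at $z=H$. Suppose there are continuously differentiable displacement fields $u^\pm=(u^\pm_r,u^\pm_z)$ on $\Omega^\pm$ such that the strains $$\varepsilon_r=\frac{\partial u_r}{\partial r},\ \varepsilon_\theta=\frac{u_r}{r},\ \varepsilon_z=\frac{\partial u_z}{\partial z},\ \varepsilon_{rz}=\frac12\Big(\frac{\partial u_r}{\partial z}+\frac{\partial u_z}{\partial r}\Big)$$ computed from $u^\pm$ satisfy $(\varepsilon_r,\varepsilon_\theta,\varepsilon_z,2\varepsilon_{rz})^T=\boldsymbol C(r)\,(\sigma^\pm_r,\sigma^\pm_\theta,\sigma^\pm_z,\sigma^\pm_{rz})^T$ on $\Omega^\pm$, with $u^-_z=0$ at $z=0$ and $u^+_z=0$ at $z=H$, and that at the interface $z=h$, for all $r\in[r_i,r_o]$,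 $$\sigma^+_{rz}=\sigma^-_{rz},\quad \sigma^+_z=\sigma^-_z,\quad u^+_z=u^-_z,\quad u^+_r-u^-_r=\frac{c}{r}.$$ Define $\boldsymbol\sigma^1=\boldsymbol\sigma^-$ on $\{z<h\}$ and $\boldsymbol\sigma^1=\boldsymbol\sigma^+$ on $\{z\ge h\}$. Then for every admissible virtual stress field $\delta\boldsymbol\sigma$, $$\int_{r_i}^{r_o}\!\!\int_0^H(\vec{\boldsymbol\sigma}^1)^T\boldsymbol C(r)\,\vec{\delta\boldsymbol\sigma}\;r\,dz\,dr=\int_{r_i}^{r_o}\!\!\int_0^h\dot{\boldsymbol\varepsilon}(\boldsymbol\sigma^0):\delta\boldsymbol\sigma\;r\,dz\,dr,$$ where $\vec{\boldsymbol\sigma}=(\sigma_r,\sigma_\theta,\sigma_z,\sigma_{rz})^T$; i.e. $\boldsymbol\sigma^1$ solves the first-order perturbation equation of the steady-state creep problem for the two-material pipe.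
   Context: Setting: steady-state creep of a pressurized pipe occupying $r_i\le r\le r_o$, $0\le z\le H$, with Norton's law $\dot{\boldsymbol\varepsilon}=A\,\boldsymbol s\,(\sigma_{vM})^{n-1}$, $\boldsymbol s=\boldsymbol\sigma-\frac13\mathrm{tr}(\boldsymbol\sigma)\boldsymbol I$, $\sigma_{vM}=\sqrt{\frac32\boldsymbol s:\boldsymbol s}$, where $A=1$ for $z\ge h$ and $A=1-s$ for $z<h$; the first-order perturbation $\boldsymbol\sigma^1=\frac{d\boldsymbol\sigma(s)}{ds}|_{s=0}$ is characterized by the linear variational equation in the conclusion. Write $\dot{\boldsymbol\varepsilon}(\boldsymbol\sigma)=\boldsymbol s(\sigma_{vM})^{n-1}$ (the $A=1$ law). The unperturbed (homogeneous pipe, $s=0$) solution is $\sigma^0_r=a+a_r r^{-2/n}$, $\sigma^0_\theta=a+a_\theta r^{-2/n}$, $\sigma^0_z=a+a_z r^{-2/n}$, $\sigma^0_{rz}=0$ with $a=p\,r_i^{2/n}/(r_o^{2/n}-r_i^{2/n})$, $a_r=-p\,r_i^{2/n}r_o^{2/n}/(r_o^{2/n}-r_i^{2/n})$, $a_\theta=\frac{n-2}{n}a_r$, $a_z=\frac{n-1}{n}a_r$. Axisymmetric stress fields have components $\sigma_r,\sigma_\theta,\sigma_z,\sigma_{rz}$ depending on $(r,z)$; the axisymmetric equilibrium equations are $\partial_r\sigma_r+\frac1r(\sigma_r-\sigma_\theta)+\partial_z\sigma_{rz}=0$ and $\partial_r\sigma_{rz}+\frac1r\sigma_{rz}+\partial_z\sigma_z=0$.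 An admissible virtual stress field is a continuously differentiable axisymmetric field on $[r_i,r_o]\times[0,H]$ satisfying these equilibrium equations and $\sigma_r=\sigma_{rz}=0$ at $r=r_i,r_o$, $\sigma_{rz}=0$ at $z=0,H$. The compliance matrix $\boldsymbol C(r)$ is the $4\times4$ Jacobian $\partial\vec{\dot{\boldsymbol\varepsilon}}/\partial\vec{\boldsymbol\sigma}$ evaluated at $\boldsymbol\sigma^0(r)$, where $\vec{\dot{\boldsymbol\varepsilon}}=(\dot\varepsilon_r,\dot\varepsilon_\theta,\dot\varepsilon_z,2\dot\varepsilon_{rz})^T$ is regarded as a function of $\vec{\boldsymbol\sigma}=(\sigma_r,\sigma_\theta,\sigma_z,\sigma_{rz})^T$ via $\dot{\boldsymbol\varepsilon}(\boldsymbol\sigma)=\boldsymbol s(\sigma_{vM})^{n-1}$. Also $\boldsymbol\varepsilon:\boldsymbol\sigma=\varepsilon_r\sigma_r+\varepsilon_\theta\sigma_\theta+\varepsilon_z\sigma_z+2\varepsilon_{rz}\sigma_{rz}$. *)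

(* Defs.v *)
From Stdlib Require Import Reals.
From Coquelicot Require Import Coquelicot.
Open Scope R_scope.

(* A scalar field of (r,z), a total function R -> R -> R (only its values on
   the relevant rectangle matter). *)
Definition field2 := R -> R -> R.

Definition dr (f : field2) (r z : R) : R := Derive (fun x => f x z) r.
Definition dz (f : field2) (r z : R) : R := Derive (fun y => f r y) z.

Definition C1_on (a b c d : R) (f : field2) : Prop :=
  forall r z, a <= r <= b -> c <= z <= d ->
    continuity_2d_pt f r z /\
    ex_derive (fun x => f x z) r /\ ex_derive (fun y => f r y) z /\
    continuity_2d_pt (dr f) r z /\ continuity_2d_pt (dz f) r z.

(* Axisymmetric stress field: components indexed by
   0 = sigma_r, 1 = sigma_theta, 2 = sigma_z, 3 = sigma_rz. *)
Definition stress := nat -> field2.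
(* Displacement field: 0 = u_r, 1 = u_z. *)
Definition displ := nat -> field2.

Definition stress_C1_on (a b c d : R) (s : stress) : Prop :=
  forall k, (k < 4)%nat -> C1_on a b c d (s k).

Definition displ_C1_on (a b c d : R) (u : displ) : Prop :=
  C1_on a b c d (u 0%nat) /\ C1_on a b c d (u 1%nat).

Definition equilibrium_on (a b c d : R) (s : stress) : Prop :=
  forall r z, a <= r <= b -> c <= z <= d ->
    dr (s 0%nat) r z + / r * (s 0%nat r z - s 1%nat r z) + dz (s 3%nat) r z = 0 /\
    dr (s 3%nat) r z + / r * s 3%nat r z + dz (s 2%nat) r z = 0.

Definition admissible (ri ro H : R) (ds : stress) : Prop :=
  stress_C1_on ri ro 0 H ds /\ equilibrium_on ri ro 0 H ds /\
  (forall z, 0 <= z <= H ->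
     ds 0%nat ri z = 0 /\ ds 3%nat ri z = 0 /\
     ds 0%nat ro z = 0 /\ ds 3%nat ro z = 0) /\
  (forall r, ri <= r <= ro -> ds 3%nat r 0 = 0 /\ ds 3%nat r H = 0).

(* Stress vectors (sigma_r, sigma_theta, sigma_z, sigma_rz) as functions nat -> R. *)
Definition vec4 := nat -> R.

Definition sum4 (f : nat -> R) : R := f 0%nat + f 1%nat + f 2%nat + f 3%nat.

(* Norton law with A = 1:  edot(sigma) = s * sigma_vM^(n-1), returned as the
   engineering vector (edot_r, edot_theta, edot_z, 2 edot_rz). *)
Definition dev_mean (v : vec4) : R := (v 0%nat + v 1%nat + v 2%nat) / 3.
Definition vonMises (v : vec4) : R :=
  sqrt (3 / 2 * ((v 0%nat - dev_mean v) ^ 2 + (v 1%nat - dev_mean v) ^ 2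
                 + (v 2%nat - dev_mean v) ^ 2 + 2 * (v 3%nat) ^ 2)).
Definition edot (n : R) (v : vec4) : vec4 := fun i =>
  match i with
  | 0%nat => (v 0%nat - dev_mean v) * Rpower (vonMises v) (n - 1)
  | 1%nat => (v 1%nat - dev_mean v) * Rpower (vonMises v) (n - 1)
  | 2%nat => (v 2%nat - dev_mean v) * Rpower (vonMises v) (n - 1)
  | 3%nat => 2 * v 3%nat * Rpower (vonMises v) (n - 1)
  | _ => 0
  end.

Definition a0 (ri ro n p : R) : R :=
  p * Rpower ri (2 / n) / (Rpower ro (2 / n) - Rpower ri (2 / n)).
Definition a_r (ri ro n p : R) : R :=
  - p * Rpower ri (2 / n) * Rpower ro (2 / n) / (Rpower ro (2 / n) - Rpower ri (2 / n)).
Definition a_theta (ri ro n p : R) : R := (n - 2) / n * a_r ri ro n p.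
Definition a_z (ri ro n p : R) : R := (n - 1) / n * a_r ri ro n p.

Definition sigma0 (ri ro n p : R) (r : R) : vec4 := fun i =>
  match i with
  | 0%nat => a0 ri ro n p + a_r ri ro n p * Rpower r (- 2 / n)
  | 1%nat => a0 ri ro n p + a_theta ri ro n p * Rpower r (- 2 / n)
  | 2%nat => a0 ri ro n p + a_z ri ro n p * Rpower r (- 2 / n)
  | _ => 0
  end.

Definition c_const (ri ro n p : R) : R :=
  Rpower 3 ((n - 1) / 2) * a_r ri ro n p * Rpower (Rabs (a_r ri ro n p)) (n - 1)
  * Rpower n (- n).

Definition upd (v : vec4) (j : nat) (t : R) : vec4 :=
  fun k => if Nat.eqb k j then t else v k.

Definition compliance (ri ro n p : R) (r : R) (i j : nat) : R :=
  Derive (fun t => edot n (upd (sigma0 ri ro n p r) j t) i) (sigma0 ri ro n p r j).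

Definition Cmul (ri ro n p r : R) (v : vec4) : vec4 :=
  fun i => sum4 (fun j => compliance ri ro n p r i j * v j).

Definition eval_stress (s : stress) (r z : R) : vec4 := fun k => s k r z.

Definition strain_of (u : displ) (r z : R) : vec4 := fun i =>
  match i with
  | 0%nat => dr (u 0%nat) r z
  | 1%nat => u 0%nat r z / r
  | 2%nat => dz (u 1%nat) r z
  | 3%nat => dz (u 0%nat) r z + dr (u 1%nat) r z
  | _ => 0
  end.

Definition glue (h : R) (sm sp : stress) : stress :=
  fun k r z => if Rlt_dec z h then sm k r z else sp k r z.

(* Main.v *)
Require Import Defs.
From Stdlib Require Import Reals Lra Lia.
From Coquelicot Require Import Coquelicot.
Open Scope R_scope.

Lemma ballR (x e y : R) : ball x e y <-> Rabs (y - x) < e.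
Proof. reflexivity. Qed.

Lemma c2_z (f : R -> R -> R) x y : continuity_2d_pt f x y -> continuous (fun t => f x t) y.
Proof.
intros H. apply filterlim_locally. intros eps. destruct (H eps) as [d Hd].
exists d. intros t Ht. apply ballR. apply Hd.
- rewrite Rminus_eq_0, Rabs_R0; apply cond_pos.
- exact Ht.
Qed.

Lemma c2_r (f : R -> R -> R) x y : continuity_2d_pt f x y -> continuous (fun t => f t y) x.
Proof.
intros H. apply filterlim_locally. intros eps. destruct (H eps) as [d Hd].
exists d. intros t Ht. apply ballR. apply Hd.
- exact Ht.
- rewrite Rminus_eq_0, Rabs_R0; apply cond_pos.
Qed.

Definition clamp (a b x : R) := Rmax a (Rmin b x).

Lemma clamp_in a b x : a <= b -> a <= clamp a b x <= b.
Proof. unfold clamp, Rmax, Rmin; intros; repeat destruct Rle_dec; lra. Qed.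

Lemma clamp_id a b x : a <= x <= b -> clamp a b x = x.
Proof. unfold clamp, Rmax, Rmin; intros; repeat destruct Rle_dec; lra. Qed.

Lemma clamp_lip a b x y : a <= b -> Rabs (clamp a b x - clamp a b y) <= Rabs (x - y).
Proof. unfold clamp, Rmax, Rmin; intros; repeat destruct Rle_dec; unfold Rabs; repeat destruct Rcase_abs; lra. Qed.

Definition cont_in (a b : R) (f : R -> R) x := forall eps : posreal, exists del : posreal,
  forall y, a <= y <= b -> Rabs (y - x) < del -> Rabs (f y - f x) < eps.

Lemma cont_clamp a b f : a <= b -> (forall x, a <= x <= b -> cont_in a b f x) ->
  forall y, continuous (fun x => f (clamp a b x)) y.
Proof.
intros Hab H y. apply filterlim_locally. intros eps.
destruct (H (clamp a b y) (clamp_in _ _ _ Hab) eps) as [d Hd].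
exists d. intros t Ht. apply ballR. apply Hd. apply clamp_in; auto.
apply ballR in Ht. eapply Rle_lt_trans. apply clamp_lip; auto. exact Ht.
Qed.

Lemma exRInt_2d (g : R -> R -> R) c d x : c <= d ->
  (forall y, c <= y <= d -> continuity_2d_pt g x y) -> ex_RInt (fun t => g x t) c d.
Proof.
intros Hcd H. apply (ex_RInt_continuous (V := R_CompleteNormedModule)). intros z Hz.
rewrite Rmin_left, Rmax_right in Hz by lra. apply c2_z, H, Hz.
Qed.

Lemma param_cont a b c d (g : R -> R -> R) : c < d ->
  (forall x y, a <= x <= b -> c <= y <= d -> continuity_2d_pt g x y) ->
  forall x0, a <= x0 <= b -> cont_in a b (fun x => RInt (fun t => g x t) c d) x0.
Proof.
intros Hcd H x0 Hx0 eps.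
assert (He : 0 < eps / (2 * (d - c))).
{ apply Rdiv_lt_0_compat. apply cond_pos. lra. }
destruct (uniform_continuity_2d g a b c d H (mkposreal _ He)) as [del Hd].
exists del. intros x Hx Hxx.
assert (E : RInt (fun t => g x t) c d - RInt (fun t => g x0 t) c d
  = RInt (fun t => g x t - g x0 t) c d).
{ symmetry. apply (RInt_minus (fun t => g x t) (fun t => g x0 t));
  apply exRInt_2d; try lra; intros; apply H; auto. }
rewrite E. eapply Rle_lt_trans.
apply abs_RInt_le_const with (M := eps / (2 * (d - c))). lra.
{ apply (ex_RInt_minus (fun t => g x t) (fun t => g x0 t));
  apply exRInt_2d; try lra; intros; apply H; auto. }
intros t Ht. left. apply (Hd x0 t x t); auto. rewrite Rminus_eq_0, Rabs_R0; apply cond_pos.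
field_simplify; try lra. pose proof (cond_pos eps). lra.
Qed.

Lemma loc_open x a b (P : R -> Prop) : a < x < b -> (forall y, a < y < b -> P y) -> locally x P.
Proof. intros H HP. apply (locally_interval P x a b); simpl; try lra. intros; apply HP; simpl in *; lra. Qed.

Lemma divr a b c d (F F1 : R -> R -> R) : a < b -> c < d ->
 (forall r z, a <= r <= b -> c <= z <= d ->
    is_derive (fun x => F x z) r (F1 r z) /\ continuity_2d_pt F r z /\ continuity_2d_pt F1 r z) ->
 is_RInt (fun r => RInt (fun z => F1 r z) c d) a b
   (RInt (fun z => F b z) c d - RInt (fun z => F a z) c d).
Proof.
intros Hab Hcd HF.
set (H := fun x => RInt (fun z => F x z) c d).
set (K := fun x => RInt (fun z => F1 x z) c d).
assert (cH : forall x, a <= x <= b -> cont_in a b H x).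
{ intros x Hx. apply param_cont; auto. intros; apply HF; auto. }
assert (cK : forall x, a <= x <= b -> cont_in a b K x).
{ intros x Hx. apply param_cont; auto. intros; apply HF; auto. }
assert (dH : forall x, a < x < b -> is_derive H x (K x)).
{ intros x Hx.
  assert (D := is_derive_RInt_param (fun u t => F u (clamp c d t)) c d x).
  rewrite Rmin_left, Rmax_right in D by lra.
  assert (E1 : RInt (fun t => Derive (fun u => F u (clamp c d t)) x) c d = K x).
  { apply RInt_ext. rewrite Rmin_left, Rmax_right by lra. intros t Ht.
    rewrite clamp_id by lra. apply is_derive_unique. apply HF; lra. }
  rewrite E1 in D. eapply is_derive_ext; [|apply D].
  - intros t. apply RInt_ext. rewrite Rmin_left, Rmax_right by lra. intros z Hz.
    rewrite clamp_id by lra. reflexivity.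
  - apply (loc_open x a b); auto. intros y Hy t Ht.
    rewrite clamp_id by lra. eexists. apply HF; lra.
  - intros t Ht.
    apply continuity_2d_pt_ext_loc with (f := fun u v => F1 u (clamp c d v)).
    + assert (Hd : 0 < Rmin (x - a) (b - x)) by (apply Rmin_glb_lt; lra).
      exists (mkposreal _ Hd). simpl. intros u v Hu Hv.
      assert (u1 : x - a > 0) by lra.
      assert (Hu' : a < u < b).
      { pose proof (Rmin_l (x - a) (b - x)). pose proof (Rmin_r (x - a) (b - x)).
        unfold Rabs in Hu; destruct Rcase_abs in Hu; lra. }
      symmetry. apply is_derive_unique. apply HF. lra. apply clamp_in; lra.
    + intros eps. destruct (proj2 (proj2 (HF x t ltac:(lra) Ht)) eps) as [del Hdel].
      exists del. intros u v Hu Hv. rewrite (clamp_id c d t) by lra. apply Hdel; auto.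
      eapply Rle_lt_trans; [|apply Hv].
      replace (clamp c d v - t) with (clamp c d v - clamp c d t) by (rewrite (clamp_id c d t) by lra; ring).
      apply clamp_lip; lra.
  - apply (loc_open x a b); auto. intros y Hy.
    eapply ex_RInt_ext; [|apply (exRInt_2d F c d y)].
    + rewrite Rmin_left, Rmax_right by lra. intros z Hz. simpl. rewrite clamp_id by lra. reflexivity.
    + lra.
    + intros z Hz. apply HF; lra. }
set (Kt := fun x => K (clamp a b x)).
set (Ht := fun x => H (clamp a b x)).
assert (cKt : forall y, continuous Kt y) by (apply cont_clamp; auto; lra).
assert (cHt : forall y, continuous Ht y) by (apply cont_clamp; auto; lra).
assert (exKt : forall u v, ex_RInt Kt u v).
{ intros u v. apply (ex_RInt_continuous (V := R_CompleteNormedModule)). intros; apply cKt. }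
set (P := fun x => RInt Kt a x).
assert (dP : forall y, is_derive P y (Kt y)).
{ intros y. apply is_derive_RInt with (a := a). 2: apply cKt.
  exists (mkposreal 1 Rlt_0_1). intros; apply RInt_correct, exKt. }
destruct (MVT_gen (fun x => P x - Ht x) a b (fun _ => 0)) as [c0 [_ Hc0]].
- rewrite Rmin_left, Rmax_right by lra. intros x Hx.
  replace 0 with (Kt x - K x).
  2: { unfold Kt. rewrite clamp_id by lra. ring. }
  apply (is_derive_minus P Ht). apply dP.
  apply is_derive_ext_loc with (f := H). 2: apply dH; auto.
  apply (loc_open x a b); auto. intros y Hy. unfold Ht. rewrite clamp_id by lra. reflexivity.
- intros x _. apply continuity_pt_filterlim.
  apply (continuous_minus P Ht). apply ex_derive_continuous. eexists; apply dP. apply cHt.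
- assert (E : RInt K a b = H b - H a).
  { transitivity (RInt Kt a b).
    + apply RInt_ext. rewrite Rmin_left, Rmax_right by lra. intros x Hx. unfold Kt. rewrite clamp_id by lra. reflexivity.
    + unfold P, Ht in Hc0. rewrite RInt_point in Hc0. rewrite !clamp_id in Hc0 by lra.
      change zero with 0 in Hc0. lra. }
  unfold H in E. rewrite <- E. apply RInt_correct.
  eapply ex_RInt_ext; [|apply (exKt a b)]. rewrite Rmin_left, Rmax_right by lra.
  intros x Hx. unfold Kt. rewrite clamp_id by lra. reflexivity.
Qed.

Lemma RInt_zero_on f c d : c <= d -> (forall z, c <= z <= d -> f z = 0) -> RInt f c d = 0.
Proof.
intros Hcd H. rewrite (RInt_ext f (fun _ => 0)).
- rewrite RInt_const. unfold scal; simpl; unfold mult; simpl. ring.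
- rewrite Rmin_left, Rmax_right by lra. intros; apply H; lra.
Qed.

Lemma div a b c d (F F1 G G2 : R -> R -> R) : a < b -> c < d ->
 (forall r z, a <= r <= b -> c <= z <= d ->
    is_derive (fun x => F x z) r (F1 r z) /\ continuity_2d_pt F r z /\ continuity_2d_pt F1 r z /\
    is_derive (fun y => G r y) z (G2 r z) /\ continuity_2d_pt G r z /\ continuity_2d_pt G2 r z) ->
 (forall z, c <= z <= d -> F a z = 0 /\ F b z = 0) ->
 is_RInt (fun r => RInt (fun z => F1 r z + G2 r z) c d) a b (RInt (fun r => G r d - G r c) a b).
Proof.
intros Hab Hcd HF HB.
assert (E : forall r, a <= r <= b -> RInt (fun z => F1 r z + G2 r z) c d
   = RInt (fun z => F1 r z) c d + (G r d - G r c)).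
{ intros r Hr. rewrite (RInt_plus (fun z => F1 r z) (fun z => G2 r z)).
  2,3: apply exRInt_2d; try lra; intros; apply HF; auto.
  replace (RInt (fun z => G2 r z) c d) with (G r d - G r c). reflexivity.
  symmetry. apply is_RInt_unique.
  assert (I := is_RInt_derive (fun y => G r y) (fun z => G2 r z) c d).
  rewrite Rmin_left, Rmax_right in I by lra. apply I.
  - intros; apply HF; auto.
  - intros; apply c2_z, HF; auto. }
eapply is_RInt_ext.
{ rewrite Rmin_left, Rmax_right by lra. intros r Hr. symmetry. apply E. lra. }
replace (RInt (fun r => G r d - G r c) a b) with
   (plus (RInt (fun z => F b z) c d - RInt (fun z => F a z) c d) (RInt (fun r => G r d - G r c) a b)).
2: { rewrite (RInt_zero_on (fun z => F b z)), (RInt_zero_on (fun z => F a z)); try lra.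
  unfold plus; simpl. ring. all: intros; apply HB; auto. }
apply (is_RInt_plus (fun r => RInt (fun z => F1 r z) c d) (fun r => G r d - G r c)).
- apply divr; auto. intros; repeat split; apply HF; auto.
- apply RInt_correct. apply (ex_RInt_continuous (V := R_CompleteNormedModule)).
  rewrite Rmin_left, Rmax_right by lra. intros r Hr.
  apply (continuous_minus (fun r => G r d) (fun r => G r c)); apply c2_r, HF; lra.
Qed.

Definition Qf (v : vec4) : R := 3 / 2 * ((v 0%nat - dev_mean v) ^ 2 + (v 1%nat - dev_mean v) ^ 2
                 + (v 2%nat - dev_mean v) ^ 2 + 2 * (v 3%nat) ^ 2).
Definition wv (v : vec4) (i : nat) : R :=
  match i with 0%nat | 1%nat | 2%nat => v i - dev_mean v | _ => 2 * v 3%nat end.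
Definition Dm (i j : nat) : R :=
  match i, j with
  | 3%nat, 3%nat => 2
  | 3%nat, _ => 0
  | _, 3%nat => 0
  | _, _ => (if Nat.eqb i j then 1 else 0) - 1/3
  end.

Lemma compl_formula n (v : vec4) i j : (i < 4)%nat -> (j < 4)%nat -> 0 < Qf v ->
  Derive (fun t => edot n (upd v j t) i) (v j) =
  Dm i j * Rpower (sqrt (Qf v)) (n - 1)
  + (n - 1) * Rpower (sqrt (Qf v)) (n - 1) / (Qf v) * (3 / 2) * wv v i * wv v j.
Proof.
intros Hi Hj HQ.
assert (HS : 0 < sqrt (Qf v)) by (apply sqrt_lt_R0; auto).
assert (HS2 : sqrt (Qf v) * sqrt (Qf v) = Qf v) by (apply sqrt_sqrt; lra).
unfold Qf, dev_mean in *.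
apply is_derive_unique.
destruct i as [|[|[|[|i]]]]; try lia; destruct j as [|[|[|[|j]]]]; try lia;
unfold edot, upd, vonMises, wv, Dm, Rpower, dev_mean in *; simpl in *;
auto_derive; unfold Rminus, Rdiv in *;
first [ (repeat split; auto; fail)
| (set (S := sqrt _) in *; set (E := exp _) in *; try rewrite <- HS2; field; lra) ].
Qed.

Lemma a_r_neg ri ro n p : 0 < ri -> ri < ro -> 0 < n -> 0 < p -> a_r ri ro n p < 0.
Proof.
intros h1 h2 h3 h4. unfold a_r.
assert (H1 : Rpower ri (2 / n) < Rpower ro (2 / n)).
{ apply Rlt_Rpower_l. apply Rdiv_lt_0_compat; lra. lra. }
assert (H2 : 0 < Rpower ri (2 / n)) by (unfold Rpower; apply exp_pos).
assert (H3 : 0 < Rpower ro (2 / n)) by (unfold Rpower; apply exp_pos).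
unfold Rdiv. rewrite Ropp_mult_distr_l_reverse, !Ropp_mult_distr_l_reverse.
apply Ropp_lt_gt_0_contravar. apply Rmult_lt_0_compat.
apply Rmult_lt_0_compat. apply Rmult_lt_0_compat; auto. auto.
apply Rinv_0_lt_compat. lra.
Qed.

Section S0.
Variables ri ro n p r : R.
Hypotheses (Hri : 0 < ri) (Hro : ri < ro) (Hn : 0 < n) (Hp : 0 < p) (Hr : 0 < r).

Let A := a_r ri ro n p.
Let Rr := Rpower r (- 2 / n).

Lemma dev0 : sigma0 ri ro n p r 0%nat - dev_mean (sigma0 ri ro n p r) = A * Rr / n.
Proof. unfold dev_mean, sigma0, a_theta, a_z. fold A Rr. field. lra. Qed.
Lemma dev1 : sigma0 ri ro n p r 1%nat - dev_mean (sigma0 ri ro n p r) = - (A * Rr / n).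
Proof. unfold dev_mean, sigma0, a_theta, a_z. fold A Rr. field. lra. Qed.
Lemma dev2 : sigma0 ri ro n p r 2%nat - dev_mean (sigma0 ri ro n p r) = 0.
Proof. unfold dev_mean, sigma0, a_theta, a_z. fold A Rr. field. lra. Qed.

Lemma Qf_sigma0 : 0 < Qf (sigma0 ri ro n p r).
Proof.
unfold Qf. rewrite dev0, dev1, dev2. simpl (sigma0 ri ro n p r 3%nat).
assert (A <> 0) by (pose proof (a_r_neg ri ro n p); unfold A; lra).
assert (0 < Rr) by (unfold Rr, Rpower; apply exp_pos).
assert (0 < A * Rr / n * (A * Rr / n)).
{ assert (Hx : A * Rr / n <> 0).
  { unfold Rdiv. apply Rmult_integral_contrapositive_currified;
    [apply Rmult_integral_contrapositive_currified; lra | apply Rinv_neq_0_compat; lra]. }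
  apply Rsqr_pos_lt in Hx. exact Hx. }
nra.
Qed.

Let L := / 2 * ln 3 + ln (Rabs A) + (- 2 / n) * ln r - ln n.

Lemma vM_sigma0 : vonMises (sigma0 ri ro n p r) = exp L.
Proof.
unfold vonMises. fold (Qf (sigma0 ri ro n p r)).
assert (A <> 0) by (pose proof (a_r_neg ri ro n p); unfold A; lra).
assert (E : Qf (sigma0 ri ro n p r) = exp L * exp L).
{ unfold Qf. rewrite dev0, dev1, dev2. simpl (sigma0 ri ro n p r 3%nat).
  rewrite <- exp_plus. unfold L.
  replace (/ 2 * ln 3 + ln (Rabs A) + - 2 / n * ln r - ln n +
     (/ 2 * ln 3 + ln (Rabs A) + - 2 / n * ln r - ln n))
   with (ln 3 + 2 * ln (Rabs A) + 2 * (- 2 / n * ln r) - 2 * ln n) by (field; lra).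
  unfold Rminus. rewrite !exp_plus, exp_Ropp.
  rewrite exp_ln by lra.
  replace (2 * ln (Rabs A)) with (ln (Rabs A) + ln (Rabs A)) by ring.
  replace (2 * ln n) with (ln n + ln n) by ring.
  replace (2 * (- 2 / n * ln r)) with (- 2 / n * ln r + - 2 / n * ln r) by ring.
  rewrite !exp_plus, exp_ln by (apply Rabs_pos_lt; auto). rewrite exp_ln by lra.
  fold (Rpower r (-2 / n)). fold Rr.
  replace (Rabs A * Rabs A) with (A * A) by (rewrite <- Rabs_mult, Rabs_right; [ring| nra]).
  field. lra. }
rewrite E. apply sqrt_square. left; apply exp_pos.
Qed.

Lemma edot_sigma0_0 : edot n (sigma0 ri ro n p r) 0%nat = c_const ri ro n p / r ^ 2.
Proof.
unfold edot. rewrite dev0, vM_sigma0. unfold Rpower at 1. rewrite ln_exp.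
unfold c_const. fold A. unfold Rpower, Rr, Rpower.
assert (A <> 0) by (pose proof (a_r_neg ri ro n p); unfold A; lra).
replace (r ^ 2) with (exp (2 * ln r)).
2: { replace (2 * ln r) with (ln r + ln r) by ring. rewrite exp_plus, exp_ln by lra. ring. }
replace (/ n) with (exp (- ln n)) by (rewrite exp_Ropp, exp_ln; lra).
unfold Rdiv. rewrite <- (exp_Ropp (2 * ln r)).
replace (A * exp (-2 * / n * ln r) * / n) with (A * exp (-2 * / n * ln r) * exp (- ln n))
  by (rewrite exp_Ropp, exp_ln; lra).
transitivity (A * exp (-2 * / n * ln r + - ln n + (n - 1) * L)).
{ rewrite !exp_plus. ring. }
transitivity (A * exp ((n - 1) / 2 * ln 3 + (n - 1) * ln (Rabs A) + - n * ln n + - (2 * ln r))).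
{ f_equal. f_equal. unfold L. field. lra. }
rewrite !exp_plus. unfold Rdiv. ring.
Qed.

Lemma edot_sigma0_1 : edot n (sigma0 ri ro n p r) 1%nat = - (c_const ri ro n p / r ^ 2).
Proof.
rewrite <- edot_sigma0_0. unfold edot. rewrite dev0, dev1. ring.
Qed.

Lemma edot_sigma0_2 : edot n (sigma0 ri ro n p r) 2%nat = 0.
Proof. unfold edot. rewrite dev2. ring. Qed.

Lemma edot_sigma0_3 : edot n (sigma0 ri ro n p r) 3%nat = 0.
Proof. unfold edot. simpl. ring. Qed.

End S0.

Lemma Dm_sym i j : Dm i j = Dm j i.
Proof.
destruct i as [|[|[|[|i]]]]; destruct j as [|[|[|[|j]]]]; simpl; try reflexivity.
all: try (destruct i; reflexivity); try (destruct j; reflexivity).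
all: unfold Dm; simpl; try (rewrite PeanoNat.Nat.eqb_sym); reflexivity.
Qed.

Lemma Csym ri ro n p r i j : 0 < ri -> ri < ro -> 0 < n -> 0 < p -> 0 < r ->
  (i < 4)%nat -> (j < 4)%nat ->
  compliance ri ro n p r i j = compliance ri ro n p r j i.
Proof.
intros. unfold compliance. rewrite !compl_formula; auto; try (apply Qf_sigma0; auto).
rewrite Dm_sym. ring.
Qed.

Lemma sum4_sym ri ro n p r (a b : vec4) : 0 < ri -> ri < ro -> 0 < n -> 0 < p -> 0 < r ->
  sum4 (fun i => a i * Cmul ri ro n p r b i) = sum4 (fun i => Cmul ri ro n p r a i * b i).
Proof.
intros. unfold Cmul, sum4. cbv beta.
rewrite (Csym ri ro n p r 1 0), (Csym ri ro n p r 2 0), (Csym ri ro n p r 3 0),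
  (Csym ri ro n p r 2 1), (Csym ri ro n p r 3 1), (Csym ri ro n p r 3 2); auto.
ring.
Qed.

Ltac cont2 :=
  repeat match goal with
  | |- continuity_2d_pt (fun u v => _ + _) _ _ => apply continuity_2d_pt_plus
  | |- continuity_2d_pt (fun u v => _ - _) _ _ => apply continuity_2d_pt_minus
  | |- continuity_2d_pt (fun u v => _ * _) _ _ => apply continuity_2d_pt_mult
  | |- continuity_2d_pt (fun u v => - _) _ _ => apply continuity_2d_pt_opp
  | |- continuity_2d_pt (fun u v => u) _ _ => apply continuity_2d_pt_id1
  | |- continuity_2d_pt (fun u v => ?c) _ _ => apply continuity_2d_pt_const
  | |- continuity_2d_pt _ _ _ => assumption
  end.

Lemma C1_at a b c d f r z : C1_on a b c d f -> a <= r <= b -> c <= z <= d ->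
  is_derive (fun x => f x z) r (dr f r z) /\ is_derive (fun y => f r y) z (dz f r z) /\
  continuity_2d_pt f r z /\ continuity_2d_pt (dr f) r z /\ continuity_2d_pt (dz f) r z.
Proof.
intros H Hr Hz. destruct (H r z Hr Hz) as [h1 [h2 [h3 [h4 h5]]]].
repeat split; auto; apply Derive_correct; auto.
Qed.


Ltac exd := repeat match goal with
  | |- _ /\ _ => split
  | |- True => exact I
  | H : is_derive ?f ?x _ |- ex_derive ?f ?x => eexists; exact H
  end.

Lemma region ri ro c d n p (s ds : stress) (u : displ) :
 0 < ri -> ri < ro -> c < d -> 0 < n -> 0 < p ->
 displ_C1_on ri ro c d u -> stress_C1_on ri ro c d ds -> equilibrium_on ri ro c d ds ->
 (forall z, c <= z <= d -> ds 0%nat ri z = 0 /\ ds 3%nat ri z = 0 /\ ds 0%nat ro z = 0 /\ ds 3%nat ro z = 0) ->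
 (forall r z, ri <= r <= ro -> c <= z <= d -> forall i, (i < 4)%nat ->
     strain_of u r z i = Cmul ri ro n p r (eval_stress s r z) i) ->
 (forall r, ri <= r <= ro -> ex_RInt (fun z =>
     sum4 (fun i => eval_stress s r z i * Cmul ri ro n p r (eval_stress ds r z) i) * r) c d) /\
 is_RInt (fun r => RInt (fun z =>
     sum4 (fun i => eval_stress s r z i * Cmul ri ro n p r (eval_stress ds r z) i) * r) c d) ri ro
   (RInt (fun r => r * (u 0%nat r d * ds 3%nat r d + u 1%nat r d * ds 2%nat r d)
                 - r * (u 0%nat r c * ds 3%nat r c + u 1%nat r c * ds 2%nat r c)) ri ro).
Proof.
intros Hri Hro Hcd Hn Hp [Hu0 Hu1] Hds Heq Hbd Hc.
set (u0 := u 0%nat) in *. set (u1 := u 1%nat) in *.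
set (d0 := ds 0%nat) in *. set (d1 := ds 1%nat) in *.
set (d2 := ds 2%nat) in *. set (d3 := ds 3%nat) in *.
assert (Hd0 : C1_on ri ro c d d0) by (apply Hds; lia).
assert (Hd2 : C1_on ri ro c d d2) by (apply Hds; lia).
assert (Hd3 : C1_on ri ro c d d3) by (apply Hds; lia).
set (F := fun x z => x * (u0 x z * d0 x z + u1 x z * d3 x z)).
set (F1 := fun x z => (u0 x z * d0 x z + u1 x z * d3 x z)
   + x * (dr u0 x z * d0 x z + u0 x z * dr d0 x z + dr u1 x z * d3 x z + u1 x z * dr d3 x z)).
set (G := fun x z => x * (u0 x z * d3 x z + u1 x z * d2 x z)).
set (G2 := fun x z => x * (dz u0 x z * d3 x z + u0 x z * dz d3 x z + dz u1 x z * d2 x z + u1 x z * dz d2 x z)).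
assert (Hall : forall r z, ri <= r <= ro -> c <= z <= d ->
    is_derive (fun x => F x z) r (F1 r z) /\ continuity_2d_pt F r z /\ continuity_2d_pt F1 r z /\
    is_derive (fun y => G r y) z (G2 r z) /\ continuity_2d_pt G r z /\ continuity_2d_pt G2 r z).
{ intros r z Hr Hz.
  destruct (C1_at _ _ _ _ _ r z Hu0 Hr Hz) as [a1 [a2 [a3 [a4 a5]]]].
  destruct (C1_at _ _ _ _ _ r z Hu1 Hr Hz) as [b1 [b2 [b3 [b4 b5]]]].
  destruct (C1_at _ _ _ _ _ r z Hd0 Hr Hz) as [c1 [c2 [c3 [c4 c5]]]].
  destruct (C1_at _ _ _ _ _ r z Hd2 Hr Hz) as [e1 [e2 [e3 [e4 e5]]]].
  destruct (C1_at _ _ _ _ _ r z Hd3 Hr Hz) as [f1 [f2 [f3 [f4 f5]]]].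
  unfold F, F1, G, G2. clear F F1 G G2. clearbody u0 u1 d0 d1 d2 d3.
  refine (conj _ (conj _ (conj _ (conj _ (conj _ _))))).
  - auto_derive. exd. unfold dr; ring.
  - cont2.
  - cont2.
  - auto_derive. exd. unfold dz; ring.
  - cont2.
  - cont2. }
assert (Hpt : forall r z, ri <= r <= ro -> c <= z <= d ->
   sum4 (fun i => eval_stress s r z i * Cmul ri ro n p r (eval_stress ds r z) i) * r = F1 r z + G2 r z).
{ intros r z Hr Hz.
  rewrite sum4_sym by lra. unfold sum4.
  rewrite <- (Hc r z Hr Hz 0%nat), <- (Hc r z Hr Hz 1%nat), <- (Hc r z Hr Hz 2%nat),
    <- (Hc r z Hr Hz 3%nat) by lia.
  destruct (Heq r z Hr Hz) as [e1 e2]. fold d0 d1 d2 d3 in e1, e2.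
  unfold strain_of, eval_stress, F1, G2. fold u0 u1 d0 d1 d2 d3.
  match goal with |- ?L = ?R =>
    assert (K : L - R = - (u0 r z * (r * (dr d0 r z + / r * (d0 r z - d1 r z) + dz d3 r z))
                         + u1 r z * (r * (dr d3 r z + / r * d3 r z + dz d2 r z)))) by (field; lra) end.
  rewrite e1, e2 in K. lra. }
split.
- intros r Hr. eapply ex_RInt_ext; [| apply (exRInt_2d (fun x z => F1 x z + G2 x z)); try lra].
  + rewrite Rmin_left, Rmax_right by lra. intros z Hz. symmetry. apply Hpt; lra.
  + intros y Hy. apply continuity_2d_pt_plus; apply Hall; auto.
- eapply is_RInt_ext; [| apply (div ri ro c d F F1 G G2); auto].
  + rewrite Rmin_left, Rmax_right by lra. intros r Hr. apply RInt_ext.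
    rewrite Rmin_left, Rmax_right by lra. intros z Hz. symmetry. apply Hpt; lra.
  + intros z Hz. unfold F. destruct (Hbd z Hz) as [h1 [h2 [h3 h4]]]. fold d0 d3 in h1, h2, h3, h4.
    rewrite h1, h2, h3, h4. split; ring.
Qed.

Ltac toR := match goal with |- ?a = ?b => change (@eq R a b) end.

Lemma plusR (x y : R) : plus x y = x + y.
Proof. reflexivity. Qed.

Lemma exRInt_cont_r (f : R -> R) a b : a <= b -> (forall x, a <= x <= b -> continuous f x) -> ex_RInt f a b.
Proof.
intros Hab H. apply (ex_RInt_continuous (V := R_CompleteNormedModule)).
rewrite Rmin_left, Rmax_right by lra. auto.
Qed.

Theorem mainTheorem2 (ri ro h H n p : R) (sm sp : stress) (um up : displ) :
  0 < ri -> ri < ro -> 0 < h -> h < H -> 0 < n -> 0 < p ->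
  (* regularity *)
  stress_C1_on ri ro 0 h sm -> stress_C1_on ri ro h H sp ->
  displ_C1_on ri ro 0 h um -> displ_C1_on ri ro h H up ->
  (* equilibrium *)
  equilibrium_on ri ro 0 h sm -> equilibrium_on ri ro h H sp ->
  (* traction-free inner/outer surfaces *)
  (forall z, 0 <= z <= h ->
     sm 0%nat ri z = 0 /\ sm 3%nat ri z = 0 /\ sm 0%nat ro z = 0 /\ sm 3%nat ro z = 0) ->
  (forall z, h <= z <= H ->
     sp 0%nat ri z = 0 /\ sp 3%nat ri z = 0 /\ sp 0%nat ro z = 0 /\ sp 3%nat ro z = 0) ->
  (* end conditions *)
  (forall r, ri <= r <= ro -> sm 3%nat r 0 = 0) ->
  (forall r, ri <= r <= ro -> sp 3%nat r H = 0) ->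
  (* compatibility: strain = C(r) sigma *)
  (forall r z, ri <= r <= ro -> 0 <= z <= h -> forall i, (i < 4)%nat ->
     strain_of um r z i = Cmul ri ro n p r (eval_stress sm r z) i) ->
  (forall r z, ri <= r <= ro -> h <= z <= H -> forall i, (i < 4)%nat ->
     strain_of up r z i = Cmul ri ro n p r (eval_stress sp r z) i) ->
  (forall r, ri <= r <= ro -> um 1%nat r 0 = 0) ->
  (forall r, ri <= r <= ro -> up 1%nat r H = 0) ->
  (* interface conditions at z = h *)
  (forall r, ri <= r <= ro ->
     sp 3%nat r h = sm 3%nat r h /\ sp 2%nat r h = sm 2%nat r h /\
     up 1%nat r h = um 1%nat r h /\
     up 0%nat r h - um 0%nat r h = c_const ri ro n p / r) ->
  forall ds : stress, admissible ri ro H ds ->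
    RInt (fun r => RInt (fun z =>
        sum4 (fun i => eval_stress (glue h sm sp) r z i
                       * Cmul ri ro n p r (eval_stress ds r z) i) * r) 0 H) ri ro
    = RInt (fun r => RInt (fun z =>
        sum4 (fun i => edot n (sigma0 ri ro n p r) i * ds i r z) * r) 0 h) ri ro.
Proof.
intros Hri Hro Hh HH Hn Hp Csm Csp Cum Cup Esm Esp Bsm Bsp Ends0 EndsH Compm Compp Um0 UpH Intf ds Hads.
destruct Hads as [Cds [Eds [Bds Eds3]]].
assert (Cdsm : stress_C1_on ri ro 0 h ds).
{ intros k Hk r z Hr Hz. apply (Cds k Hk r z Hr). lra. }
assert (Cdsp : stress_C1_on ri ro h H ds).
{ intros k Hk r z Hr Hz. apply (Cds k Hk r z Hr). lra. }
assert (Edsm : equilibrium_on ri ro 0 h ds).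
{ intros r z Hr Hz. apply Eds; auto; lra. }
assert (Edsp : equilibrium_on ri ro h H ds).
{ intros r z Hr Hz. apply Eds; auto; lra. }
destruct (region ri ro 0 h n p sm ds um) as [Exm Im]; auto.
{ intros z Hz. apply Bds. lra. }
destruct (region ri ro h H n p sp ds up) as [Exp Ip]; auto.
{ intros z Hz. apply Bds. lra. }
set (c := c_const ri ro n p) in *.
destruct Cum as [Cum0 Cum1]. destruct Cup as [Cup0 Cup1].
assert (Cd2 : C1_on ri ro 0 H (ds 2%nat)) by (apply Cds; lia).
assert (Cd3 : C1_on ri ro 0 H (ds 3%nat)) by (apply Cds; lia).
assert (Cd0 : C1_on ri ro 0 H (ds 0%nat)) by (apply Cds; lia).
set (Tm := fun r => r * (um 0%nat r h * ds 3%nat r h + um 1%nat r h * ds 2%nat r h)).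
set (Tp := fun r => - (r * (up 0%nat r h * ds 3%nat r h + up 1%nat r h * ds 2%nat r h))).
assert (ExTm : ex_RInt Tm ri ro).
{ apply exRInt_cont_r; [lra|]. intros x Hx.
  unfold Tm. apply (c2_r (fun x y => x * (um 0%nat x y * ds 3%nat x y + um 1%nat x y * ds 2%nat x y)) x h).
  destruct (C1_at _ _ _ _ _ x h Cum0 Hx ltac:(lra)) as [_ [_ [a3 _]]].
  destruct (C1_at _ _ _ _ _ x h Cum1 Hx ltac:(lra)) as [_ [_ [b3 _]]].
  destruct (C1_at _ _ _ _ _ x h Cd2 Hx ltac:(lra)) as [_ [_ [e3 _]]].
  destruct (C1_at _ _ _ _ _ x h Cd3 Hx ltac:(lra)) as [_ [_ [f3 _]]].
  cont2. }
assert (ExTp : ex_RInt Tp ri ro).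
{ apply exRInt_cont_r; [lra|]. intros x Hx.
  unfold Tp. apply (c2_r (fun x y => - (x * (up 0%nat x y * ds 3%nat x y + up 1%nat x y * ds 2%nat x y))) x h).
  destruct (C1_at _ _ _ _ _ x h Cup0 Hx ltac:(lra)) as [_ [_ [a3 _]]].
  destruct (C1_at _ _ _ _ _ x h Cup1 Hx ltac:(lra)) as [_ [_ [b3 _]]].
  destruct (C1_at _ _ _ _ _ x h Cd2 Hx ltac:(lra)) as [_ [_ [e3 _]]].
  destruct (C1_at _ _ _ _ _ x h Cd3 Hx ltac:(lra)) as [_ [_ [f3 _]]].
  cont2. }
assert (RHS : RInt (fun r => RInt (fun z =>
        sum4 (fun i => edot n (sigma0 ri ro n p r) i * ds i r z) * r) 0 h) ri ro
     = RInt (fun r => - c * ds 3%nat r h) ri ro).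
{ transitivity (RInt (fun r => - c * ds 3%nat r h - - c * ds 3%nat r 0) ri ro).
  2: { apply RInt_ext. rewrite Rmin_left, Rmax_right by lra. intros r Hr.
       toR. rewrite (proj1 (Eds3 r ltac:(lra))). ring. }
  apply is_RInt_unique.
  eapply is_RInt_ext; [| apply (div ri ro 0 h
       (fun x z => - c * ds 0%nat x z) (fun x z => - c * dr (ds 0%nat) x z)
       (fun x z => - c * ds 3%nat x z) (fun x z => - c * dz (ds 3%nat) x z)); auto].
  - rewrite Rmin_left, Rmax_right by lra. intros r Hr. apply RInt_ext.
    rewrite Rmin_left, Rmax_right by lra. intros z Hz.
    unfold sum4. rewrite edot_sigma0_0, edot_sigma0_1, edot_sigma0_2, edot_sigma0_3 by lra.
    fold c. toR. destruct (Eds r z ltac:(lra) ltac:(lra)) as [e1 _].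
    match goal with |- ?L = ?R =>
      assert (K : L - R = - c * (dr (ds 0%nat) r z + / r * (ds 0%nat r z - ds 1%nat r z) + dz (ds 3%nat) r z))
        by (field; lra) end.
    rewrite e1 in K. lra.
  - intros r z Hr Hz.
    destruct (C1_at _ _ _ _ _ r z Cd0 Hr ltac:(lra)) as [a1 [a2 [a3 [a4 a5]]]].
    destruct (C1_at _ _ _ _ _ r z Cd3 Hr ltac:(lra)) as [f1 [f2 [f3 [f4 f5]]]].
    refine (conj _ (conj _ (conj _ (conj _ (conj _ _))))).
    + apply (is_derive_scal (fun x => ds 0%nat x z)). exact a1.
    + cont2.
    + cont2.
    + apply (is_derive_scal (fun y => ds 3%nat r y)). exact f2.
    + cont2.
    + cont2.
  - intros z Hz. destruct (Bds z ltac:(lra)) as [b1 [b2 [b3 b4]]].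
    rewrite b1, b3. split; ring. }
rewrite RHS. clear RHS.
apply is_RInt_unique.
assert (Sum : is_RInt (fun r => - c * ds 3%nat r h) ri ro (RInt Tm ri ro + RInt Tp ri ro)).
{ eapply is_RInt_ext; [| exact (is_RInt_plus (V := R_NormedModule) Tm Tp ri ro _ _ (RInt_correct Tm ri ro ExTm) (RInt_correct Tp ri ro ExTp))].
  rewrite Rmin_left, Rmax_right by lra. intros r Hr. unfold Tm, Tp.
  destruct (Intf r ltac:(lra)) as [i1 [i2 [i3 i4]]].
  rewrite plusR, i3.
  replace (up 0%nat r h) with (um 0%nat r h + c / r) by (fold c in i4; lra).
  toR. field. lra. }
assert (EM : RInt (fun r => r * (um 0%nat r h * ds 3%nat r h + um 1%nat r h * ds 2%nat r h)
                 - r * (um 0%nat r 0 * ds 3%nat r 0 + um 1%nat r 0 * ds 2%nat r 0)) ri ro = RInt Tm ri ro).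
{ apply RInt_ext. rewrite Rmin_left, Rmax_right by lra. intros r Hr. unfold Tm.
  toR. rewrite (Um0 r ltac:(lra)), (proj1 (Eds3 r ltac:(lra))). ring. }
assert (EP : RInt (fun r => r * (up 0%nat r H * ds 3%nat r H + up 1%nat r H * ds 2%nat r H)
                 - r * (up 0%nat r h * ds 3%nat r h + up 1%nat r h * ds 2%nat r h)) ri ro = RInt Tp ri ro).
{ apply RInt_ext. rewrite Rmin_left, Rmax_right by lra. intros r Hr. unfold Tp.
  toR. rewrite (UpH r ltac:(lra)), (proj2 (Eds3 r ltac:(lra))). ring. }
rewrite EM in Im. rewrite EP in Ip.
rewrite (is_RInt_unique _ _ _ _ Sum).
eapply is_RInt_ext; [| exact (is_RInt_plus (V := R_NormedModule) _ _ ri ro _ _ Im Ip)].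
rewrite Rmin_left, Rmax_right by lra. intros r Hr.
set (g := fun z => sum4 (fun i => eval_stress (glue h sm sp) r z i
                       * Cmul ri ro n p r (eval_stress ds r z) i) * r).
assert (E1 : forall z, 0 < z < h -> sum4 (fun i => eval_stress sm r z i
                       * Cmul ri ro n p r (eval_stress ds r z) i) * r = g z).
{ intros z Hz. unfold g, sum4. cbv beta. unfold eval_stress, glue.
  destruct (Rlt_dec z h); [reflexivity | lra]. }
assert (E2 : forall z, h < z < H -> sum4 (fun i => eval_stress sp r z i
                       * Cmul ri ro n p r (eval_stress ds r z) i) * r = g z).
{ intros z Hz. unfold g, sum4. cbv beta. unfold eval_stress, glue.
  destruct (Rlt_dec z h); [lra | reflexivity]. }
fold g. rewrite <- (RInt_Chasles g 0 h H).
- rewrite !plusR. toR. change (plus (RInt g 0 h) (RInt g h H)) with (RInt g 0 h + RInt g h H). f_equal; apply RInt_ext.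
  + rewrite Rmin_left, Rmax_right by lra. exact E1.
  + rewrite Rmin_left, Rmax_right by lra. exact E2.
- eapply ex_RInt_ext; [| apply (Exm r); lra]. rewrite Rmin_left, Rmax_right by lra. exact E1.
- eapply ex_RInt_ext; [| apply (Exp r); lra]. rewrite Rmin_left, Rmax_right by lra. exact E2.
Qed.
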